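(* Let $\boldsymbol\Sigma$ be the covariance matrix of a pure two-mode Gaussian state of a signal mode $S$ and an idler mode $I$. Then there exist a phase rotation acting on $S$ and a symplectic transformation acting on $I$ such that the transformed covariance matrix has the form $\begin{bmatrix}\boldsymbol\Sigma_S&\boldsymbol\Sigma_{SI}\\ \boldsymbol\Sigma_{SI}^\top&\boldsymbol\Sigma_I\end{bmatrix}$ with $$\boldsymbol\Sigma_S=\mathrm{diag}(ar,\,ar^{-1}),\quad \boldsymbol\Sigma_I=\mathrm{diag}(a,a),\quad \boldsymbol\Sigma_{SI}=\sqrt{a^2-\tfrac14}\begin{bmatrix}\sqrt r\cos\phi&\sqrt r\sin\phi\\ \sqrt{r^{-1}}\sin\phi&-\sqrt{r^{-1}}\cos\phi\end{bmatrix}$$ for some $a\ge\tfrac12$, $r>0$ and $\phi\in\mathbb{R}$.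
   Context: Quadrature vector $\mathbf R=(q_S,p_S,q_I,p_I)^\top$ with $[R_i,R_j]=\mathrm{i}\Omega_{ij}$, $\boldsymbol\Omega=\mathbb{I}_2\otimes\begin{bmatrix}0&1\\-1&0\end{bmatrix}$; covariance matrix $\Sigma_{ij}=\tfrac12\langle R_iR_j+R_jR_i\rangle-\langle R_i\rangle\langle R_j\rangle$ (vacuum has $\boldsymbol\Sigma=\mathbb{I}_4/2$). A phase rotation on $S$ acts on the covariance matrix by conjugation with $\mathbf R(\varphi)\oplus\mathbb{I}_2$, $\mathbf R(\varphi)=\begin{bmatrix}\cos\varphi&-\sin\varphi\\ \sin\varphi&\cos\varphi\end{bmatrix}$; a symplectic transformation $\mathbf S_I$ on $I$ acts by conjugation with $\mathbb{I}_2\oplus\mathbf S_I$. *)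

(* Defs.v *)
From HB Require Import structures.
From mathcomp Require Import all_boot all_order all_algebra.
From mathcomp Require Import reals trigo.
Set Implicit Arguments. Unset Strict Implicit. Unset Printing Implicit Defensive.
Import Order.TTheory GRing.Theory Num.Theory.
Local Open Scope ring_scope.

Section Defs.
Variable R : realType.

Definition mx2 (a b c d : R) : 'M[R]_2 :=
  \matrix_(i < 2, j < 2)
    if val i == 0%N then (if val j == 0%N then a else b)
    else (if val j == 0%N then c else d).

Definition Jmx : 'M[R]_2 := mx2 0 1 (-1) 0.

(* Omega = I_2 (x) J, acting on R = (q_S, p_S, q_I, p_I) *)
Definition Omega4 : 'M[R]_(2 + 2) := block_mx Jmx 0 0 Jmx.

Definition symplectic2 (S : 'M[R]_2) : Prop := S *m Jmx *m S^T = Jmx.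
Definition symplectic4 (S : 'M[R]_(2 + 2)) : Prop := S *m Omega4 *m S^T = Omega4.

(* covariance matrix of a pure two-mode Gaussian state:
   a symplectic transformation of the vacuum covariance I/2 *)
Definition pure_gaussian_cm (Sig : 'M[R]_(2 + 2)) : Prop :=
  exists S : 'M[R]_(2 + 2), symplectic4 S /\ Sig = (2%:R)^-1 *: (S *m S^T).

Definition rotmx (phi : R) : 'M[R]_2 := mx2 (cos phi) (- sin phi) (sin phi) (cos phi).

Definition transform_cm (theta : R) (SI : 'M[R]_2) (Sig : 'M[R]_(2 + 2))
  : 'M[R]_(2 + 2) :=
  let T := block_mx (rotmx theta) 0 0 SI in T *m Sig *m T^T.

Definition normal_form (a r phi : R) : 'M[R]_(2 + 2) :=
  let SigS := mx2 (a * r) 0 0 (a * r^-1) in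
  let SigI := mx2 a 0 0 a in
  let c := Num.sqrt (a ^+ 2 - 4%:R^-1) in
  let SigSI := c *: mx2 (Num.sqrt r * cos phi) (Num.sqrt r * sin phi)
                        (Num.sqrt (r^-1) * sin phi) (- (Num.sqrt (r^-1) * cos phi)) in
  block_mx SigS SigSI SigSI^T SigI.

End Defs.

(* Main.v *)
Require Import Defs.
From HB Require Import structures.
From mathcomp Require Import all_boot all_order all_algebra.
From mathcomp Require Import reals trigo.
From mathcomp Require Import ring lra.
Import Order.TTheory GRing.Theory Num.Theory.
Local Open Scope ring_scope.

Section M2.
Variable R : realType.
Implicit Types a b c d e f g h : R.

Lemma mx2E (M : 'M[R]_2) : M = mx2 (M 0 0) (M 0 1) (M 1 0) (M 1 1).
Proof.
apply/matrixP => i j; rewrite mxE.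
case: i => [[|[|i]] Hi]; case: j => [[|[|j]] Hj] //=; congr (M _ _); exact: val_inj.
Qed.

Lemma mx2_mul a b c d e f g h :
  mx2 a b c d *m mx2 e f g h = mx2 (a*e+b*g) (a*f+b*h) (c*e+d*g) (c*f+d*h).
Proof.
apply/matrixP => i j; rewrite !mxE !big_ord_recl big_ord0 !mxE /=.
by case: i => [[|[|i]] Hi]; case: j => [[|[|j]] Hj] //=; rewrite addr0.
Qed.

Lemma mx2_tr a b c d : (mx2 a b c d)^T = mx2 a c b d.
Proof.
apply/matrixP => i j; rewrite !mxE.
by case: i => [[|[|i]] Hi]; case: j => [[|[|j]] Hj].
Qed.

Lemma mx2_add a b c d e f g h :
  mx2 a b c d + mx2 e f g h = mx2 (a+e) (b+f) (c+g) (d+h).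
Proof.
apply/matrixP => i j; rewrite !mxE.
by case: i => [[|[|i]] Hi]; case: j => [[|[|j]] Hj].
Qed.

Lemma mx2_scale k a b c d : k *: mx2 a b c d = mx2 (k*a) (k*b) (k*c) (k*d).
Proof.
apply/matrixP => i j; rewrite !mxE.
by case: i => [[|[|i]] Hi]; case: j => [[|[|j]] Hj].
Qed.

Lemma mx2_opp a b c d : - mx2 a b c d = mx2 (-a) (-b) (-c) (-d).
Proof.
apply/matrixP => i j; rewrite !mxE.
by case: i => [[|[|i]] Hi]; case: j => [[|[|j]] Hj].
Qed.

Lemma mx2_0 : (0 : 'M[R]_2) = mx2 0 0 0 0.
Proof. by rewrite [LHS]mx2E !mxE. Qed.

Lemma mx2_1 : (1%:M : 'M[R]_2) = mx2 1 0 0 1.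
Proof. by rewrite [LHS]mx2E !mxE. Qed.

Lemma mx2_eq a b c d e f g h :
  mx2 a b c d = mx2 e f g h -> [/\ a = e, b = f, c = g & d = h].
Proof.
move=> H; have := congr1 (fun M : 'M[R]_2 => (M 0 0, M 0 1, M 1 0, M 1 1)) H.
by rewrite !mxE /= => -[].
Qed.


Lemma Omega2 : Omega4 R *m Omega4 R = - 1%:M.
Proof.
rewrite /Omega4 mulmx_block !mulmx0 !mul0mx !addr0 add0r /Jmx mx2_mul.
rewrite (scalar_mx_block 2 2) opp_block_mx mx2_1 mx2_opp mx2_0 !oppr0.
congr block_mx; rewrite ?mx2_opp ?oppr0 //; congr mx2; ring.
Qed.

Lemma sympl_tr (S : 'M[R]_(2+2)) : symplectic4 S -> S^T *m Omega4 R *m S = Omega4 R.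
Proof.
rewrite /symplectic4 => hS.
have h1 : S *m (- (Omega4 R *m S^T *m Omega4 R)) = 1%:M.
  by rewrite mulmxN !mulmxA hS Omega2; apply: opprK.
have h2 := mulmx1C h1.
have : Omega4 R *m (- (Omega4 R *m S^T *m Omega4 R) *m S) = Omega4 R by rewrite h2 mulmx1.
rewrite mulNmx mulmxN !mulmxA Omega2 !mulNmx mul1mx => h3.
by rewrite -[RHS]h3; apply/matrixP => i j; rewrite !mxE opprK.
Qed.

Lemma purity (S : 'M[R]_(2+2)) : symplectic4 S ->
  (2%:R^-1 *: (S *m S^T)) *m Omega4 R *m (2%:R^-1 *: (S *m S^T)) = 4%:R^-1 *: Omega4 R.
Proof.
move=> hS; rewrite -!scalemxAl -!scalemxAr !scalerA.
have -> : (S *m S^T *m Omega4 R *m (S *m S^T)) = Omega4 R.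
  by rewrite !mulmxA -(mulmxA S S^T) -(mulmxA S (S^T *m _) S) sympl_tr //; exact: hS.
have -> : (2%:R^-1 / 2%:R : R) = 4%:R^-1 by rewrite -invfM -natrM.
by [].
Qed.

Lemma sympl_mul (T S : 'M[R]_(2+2)) : symplectic4 T -> symplectic4 S -> symplectic4 (T *m S).
Proof.
rewrite /symplectic4 => hT hS.
by rewrite trmx_mul !mulmxA -(mulmxA T S) -(mulmxA T (S *m _) S^T) hS hT.
Qed.

Lemma sympl2_det (M : 'M[R]_2) : M 0 0 * M 1 1 - M 0 1 * M 1 0 = 1 -> symplectic2 M.
Proof.
rewrite /symplectic2 /Jmx (mx2E M) !mxE /= => h.
rewrite mx2_tr !mx2_mul; congr mx2; first [ring | rewrite -[in RHS]h; ring].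
Qed.

Lemma sympl_blk (A B : 'M[R]_2) : symplectic2 A -> symplectic2 B ->
  symplectic4 (block_mx A 0 0 B).
Proof.
rewrite /symplectic2 /symplectic4 /Omega4 => hA hB.
rewrite tr_block_mx !mulmx_block !trmx0 !mulmx0 !mul0mx !addr0 !add0r.
by rewrite hA hB !mul0mx.
Qed.

Lemma diag_ge0 n (M : 'M[R]_n) i : 0 <= (2%:R^-1 *: (M *m M^T)) i i.
Proof.
rewrite !mxE; apply: mulr_ge0; first by rewrite invr_ge0 ler0n.
apply: sumr_ge0 => k _; rewrite !mxE -expr2; exact: sqr_ge0.
Qed.

Lemma transformE theta SI (S : 'M[R]_(2+2)) :
  transform_cm theta SI (2%:R^-1 *: (S *m S^T)) =
  2%:R^-1 *: ((block_mx (rotmx theta) 0 0 SI *m S) *m (block_mx (rotmx theta) 0 0 SI *m S)^T).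
Proof.
by rewrite /transform_cm /= trmx_mul -scalemxAr -scalemxAl !mulmxA.
Qed.


Lemma unit_circle (x y : R) : x ^+ 2 + y ^+ 2 = 1 -> exists t : R, cos t = x /\ sin t = y.
Proof.
move=> h.
have hx : -1 <= x <= 1 by apply/andP; split; nra.
have [c s] := acos_def hx.
have hs := sin_acos hx.
have e : 1 - x ^+ 2 = y ^+ 2 by lra.
rewrite e sqrtr_sqr in hs.
case: (lerP 0 y) => hy.
  by exists (acos x); split => //; rewrite hs ger0_norm.
exists (- acos x); split; first by rewrite cosN.
by rewrite sinN hs ltr0_norm // opprK.
Qed.

Lemma core (l1 l2 a x y z w : R) : 0 < a -> 0 <= l1 ->
  let Sg := block_mx (mx2 l1 0 0 l2) (mx2 x y z w) (mx2 x y z w)^T (mx2 a 0 0 a) in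
  Sg *m Omega4 R *m Sg = 4%:R^-1 *: Omega4 R ->
  2%:R^-1 <= a /\ exists r phi : R, 0 < r /\ Sg = normal_form a r phi.
Proof.
move=> ha hl1 Sg hP.
have := hP; rewrite /Sg /Omega4 /Jmx !mulmx_block !mx2_0 !mx2_tr scale_block_mx !mx2_scale.
repeat (rewrite mx2_mul || rewrite mx2_add).
move/eq_block_mx => [/mx2_eq[_ e2 _ _] /mx2_eq[f1 f2 _ _] _ /mx2_eq[_ h2 _ _]].
move: e2 f1 f2 h2.
rewrite !(mulr0, mul0r, addr0, add0r, mulr1, mul1r, mulrN1, mulN1r, oppr0) => e2 f1 f2 h2.
have hll : l1 * l2 = a ^+ 2 by rewrite expr2; lra.
have l1pos : 0 < l1.
  rewrite lt0r hl1 andbT; apply/eqP => l10; move: hll; rewrite l10 mul0r => /esym/eqP.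
  by rewrite expf_eq0 /= gt_eqF.
set r := l1 / a.
have rpos : 0 < r by rewrite divr_gt0.
set sr := Num.sqrt r.
have srpos : 0 < sr by rewrite sqrtr_gt0.
have sr2 : sr ^+ 2 = r by rewrite sqr_sqrtr // ltW.
have hr0 := gt_eqF rpos. have hsr0 := gt_eqF srpos. have ha0 := gt_eqF ha. have hl0 := gt_eqF l1pos.
have l1E : l1 = a * r by rewrite /r mulrC divfK // gt_eqF.
have l2E : l2 = a * r^-1.
  apply: (mulfI (negbT (gt_eqF l1pos))); rewrite hll l1E; field.
  by by rewrite ?hr0 ?ha0.
have zE : z = y / r.
  apply: (mulfI (negbT (gt_eqF l1pos))); rewrite l1E in f1 *.
  have -> : a * r * (y / r) = a * y by field; by rewrite ?hr0 ?hsr0 ?ha0 ?hl0.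
  lra.
have wE : w = - x / r.
  apply: (mulfI (negbT (gt_eqF l1pos))); rewrite l1E in f2 *.
  have -> : a * r * (- x / r) = - (a * x) by field; by rewrite ?hr0 ?hsr0 ?ha0 ?hl0.
  lra.
have xy : x ^+ 2 + y ^+ 2 = r * (a ^+ 2 - 4%:R^-1).
  move: h2; rewrite zE wE => h2.
  have : (x ^+ 2 + y ^+ 2) / r = a ^+ 2 - 4%:R^-1.
    rewrite -h2 !expr2; field; by rewrite ?hr0 ?hsr0 ?ha0 ?hl0.
  move=> <-; field; by rewrite ?hr0 ?hsr0 ?ha0 ?hl0.
have c2pos : 0 <= a ^+ 2 - 4%:R^-1.
  have : 0 <= r * (a ^+ 2 - 4%:R^-1) by rewrite -xy; nra.
  by rewrite pmulr_rge0.
set c := Num.sqrt (a ^+ 2 - 4%:R^-1).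
have c2 : c ^+ 2 = a ^+ 2 - 4%:R^-1 by rewrite sqr_sqrtr.
have cge0 : 0 <= c by rewrite sqrtr_ge0.
split.
  have h4 : (4%:R^-1 : R) = 2%:R^-1 ^+ 2 by rewrite expr2 -invfM -natrM.
  rewrite h4 in c2pos.
  have h2pos : (0 : R) <= 2%:R^-1 by rewrite invr_ge0 ler0n.
  nra.
set P := x / sr; set Q := y / sr.
have PQ : P ^+ 2 + Q ^+ 2 = c ^+ 2.
  rewrite c2 /P /Q !expr2 -[a ^+ 2 - _](@mulKf _ r); last by rewrite gt_eqF.
  rewrite -xy -sr2; field; by rewrite ?hr0 ?hsr0 ?ha0 ?hl0.
have [phi [hphi1 hphi2]] : exists phi : R, c * cos phi = P /\ c * sin phi = Q.
  have [c0|cpos] := eqVneq c 0.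
    have hPQ : P ^+ 2 + Q ^+ 2 = 0 by rewrite PQ c0 expr0n.
    exists 0; rewrite c0 !mul0r; split; nra.
  have hu : (P / c) ^+ 2 + (Q / c) ^+ 2 = 1.
    have -> : (P / c) ^+ 2 + (Q / c) ^+ 2 = (P ^+ 2 + Q ^+ 2) / c ^+ 2 by field.
    by rewrite PQ divff // expf_neq0.
  have [t [ht1 ht2]] := unit_circle _ _ hu.
  by exists t; rewrite ht1 ht2; split; field.
exists r, phi; split => //.
rewrite /normal_form /=.
have hC : mx2 x y z w = c *: mx2 (Num.sqrt r * cos phi) (Num.sqrt r * sin phi)
                        (Num.sqrt (r^-1) * sin phi) (- (Num.sqrt (r^-1) * cos phi)).
  rewrite mx2_scale sqrtrV; last exact: ltW.
  rewrite -/sr zE wE.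
  have xE : x = sr * P by rewrite /P; field; by rewrite ?hr0 ?hsr0 ?ha0 ?hl0.
  have yE : y = sr * Q by rewrite /Q; field; by rewrite ?hr0 ?hsr0 ?ha0 ?hl0.
  rewrite xE yE -hphi1 -hphi2 -sr2; congr mx2; field; by rewrite ?hr0 ?hsr0 ?ha0 ?hl0.
rewrite /Sg -(mx2_tr x y z w) hC -l1E -l2E.
by [].
Qed.


Lemma rot_exists (a1 a2 a3 : R) : exists t : R,
  cos t * sin t * (a1 - a3) + a2 * (cos t ^+ 2 - sin t ^+ 2) = 0.
Proof.
set rho := Num.sqrt ((a1 - a3) ^+ 2 + 4%:R * a2 ^+ 2).
have hge : 0 <= (a1 - a3) ^+ 2 + 4%:R * a2 ^+ 2.
  by apply: addr_ge0; [exact: sqr_ge0 | apply: mulr_ge0; [exact: ler0n | exact: sqr_ge0]].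
have rho2 : rho ^+ 2 = (a1 - a3) ^+ 2 + 4%:R * a2 ^+ 2 by rewrite sqr_sqrtr.
have [r0|rn0] := eqVneq rho 0.
  have h0 : (a1 - a3) ^+ 2 + 4%:R * a2 ^+ 2 = 0 by rewrite -rho2 r0 expr0n.
  have h4 : (0:R) < 4%:R by rewrite ltr0n.
  have sq1 := sqr_ge0 (a1 - a3); have sq2 := sqr_ge0 a2.
  have e1 : a2 = 0.
    have : a2 ^+ 2 = 0 by lra.
    by move/eqP; rewrite sqrf_eq0 => /eqP.
  have e2 : a1 - a3 = 0.
    have : (a1 - a3) ^+ 2 = 0 by lra.
    by move/eqP; rewrite sqrf_eq0 => /eqP.
  by exists 0; rewrite e1 e2; ring.
have hu : ((a1 - a3) / rho) ^+ 2 + (- (2%:R * a2) / rho) ^+ 2 = 1.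
  have -> : ((a1 - a3) / rho) ^+ 2 + (- (2%:R * a2) / rho) ^+ 2 = rho ^+ 2 / rho ^+ 2.
    by rewrite {1}rho2; field.
  by rewrite divff // expf_neq0.
have [psi [h1 h2]] := unit_circle _ _ hu.
exists (psi / 2%:R).
have epsi : psi = psi / 2%:R + psi / 2%:R by field.
rewrite epsi cosD in h1; rewrite epsi sinD in h2.
set c := cos (psi / 2%:R) in h1 h2 *; set s := sin (psi / 2%:R) in h1 h2 *.
have e1 : c ^+ 2 - s ^+ 2 = (a1 - a3) / rho by rewrite -h1; ring.
have e2 : c * s = - a2 / rho.
  have : 2%:R * (c * s) = - (2%:R * a2) / rho by rewrite -h2; ring.
  move=> h; apply: (mulfI (x := 2%:R)); first by rewrite pnatr_eq0.
  by rewrite h; field.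
by rewrite e2 e1; field.
Qed.

Lemma drsub_SSt (M : 'M[R]_(2+2)) : drsubmx (2%:R^-1 *: (M *m M^T)) =
  2%:R^-1 *: (dlsubmx M *m (dlsubmx M)^T + drsubmx M *m (drsubmx M)^T).
Proof.
by rewrite -{1 2}(submxK M) tr_block_mx mulmx_block scale_block_mx block_mxKdr.
Qed.

Lemma drsub_sympl (M : 'M[R]_(2+2)) : symplectic4 M ->
  dlsubmx M *m Jmx R *m (dlsubmx M)^T + drsubmx M *m Jmx R *m (drsubmx M)^T = Jmx R.
Proof.
move/(congr1 drsubmx); rewrite -{1 2}(submxK M) /Omega4 tr_block_mx !mulmx_block block_mxKdr block_mxKdr.
by rewrite !mulmx0 !addr0 !add0r.
Qed.

Lemma detB_pos (M : 'M[R]_(2+2)) (B : 'M[R]_2) : symplectic4 M ->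
  B = drsubmx (2%:R^-1 *: (M *m M^T)) -> 0 < B 0 0 * B 1 1 - B 0 1 ^+ 2.
Proof.
move=> hM ->; have hs := drsub_sympl _ hM.
rewrite drsub_SSt; move: hs.
rewrite (mx2E (dlsubmx M)) (mx2E (drsubmx M)).
set p := dlsubmx M 0 0; set q := dlsubmx M 0 1; set r := dlsubmx M 1 0; set s := dlsubmx M 1 1.
set t := drsubmx M 0 0; set u := drsubmx M 0 1; set v := drsubmx M 1 0; set w := drsubmx M 1 1.
rewrite /Jmx !mx2_tr.
repeat (rewrite mx2_mul || rewrite mx2_add).
move/mx2_eq => [_ e _ _].
rewrite mx2_scale !mxE /=.
move: e; rewrite !(mulr0, mul0r, addr0, add0r, mulr1, mul1r, mulrN1, mulN1r, oppr0) => e.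
set m1 := p * s - q * r; set m2 := t * w - u * v.
have hm : m1 + m2 = 1 by rewrite /m1 /m2; lra.
have lag : (p * p + q * q + (t * t + u * u)) * (r * r + s * s + (v * v + w * w))
   - (p * r + q * s + (t * v + u * w)) ^+ 2 =
   m1 ^+ 2 + m2 ^+ 2 + (p * v - t * r) ^+ 2 + (p * w - u * r) ^+ 2
   + (q * v - t * s) ^+ 2 + (q * w - u * s) ^+ 2.
  by rewrite /m1 /m2; ring.
have pos : 0 < m1 ^+ 2 + m2 ^+ 2.
  have h1 : (m1 + m2) ^+ 2 = 1 by rewrite hm expr1n.
  have h2 := sqr_ge0 (m1 - m2).
  lra.
have ge : 0 <= (p * v - t * r) ^+ 2 + (p * w - u * r) ^+ 2
   + (q * v - t * s) ^+ 2 + (q * w - u * s) ^+ 2 by rewrite !addr_ge0 ?sqr_ge0.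
have -> : 2%:R^-1 * (p * p + q * q + (t * t + u * u)) * (2%:R^-1 * (r * r + s * s + (v * v + w * w)))
   - (2%:R^-1 * (p * r + q * s + (t * v + u * w))) ^+ 2 =
   4%:R^-1 * ((p * p + q * q + (t * t + u * u)) * (r * r + s * s + (v * v + w * w))
   - (p * r + q * s + (t * v + u * w)) ^+ 2) by field.
rewrite lag; apply: mulr_gt0; first by rewrite invr_gt0 ltr0n.
lra.
Qed.

End M2.

Theorem lemma3 (R : realType) (Sig : 'M[R]_(2 + 2)) :
  pure_gaussian_cm Sig ->
  exists (theta : R) (SI : 'M[R]_2),
    symplectic2 SI /\
    exists a r phi : R,
      2%:R^-1 <= a /\ 0 < r /\ transform_cm theta SI Sig = normal_form a r phi.
Proof.
case=> S [hS ->].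
set Sg := 2%:R^-1 *: (S *m S^T).
have hsym : forall i j, Sg i j = Sg j i.
  move=> i j; rewrite /Sg !mxE; congr (_ * _); apply: eq_bigr => k _; by rewrite !mxE mulrC.
have SgE : Sg = 2%:R^-1 *: (S *m S^T) by [].
clearbody Sg.
set A := ulsubmx Sg; set C := ursubmx Sg; set B := drsubmx Sg.
have hblk : Sg = block_mx A C C^T B.
  rewrite -{1}(submxK Sg); congr block_mx; apply/matrixP => p q; rewrite !mxE; exact: hsym.
have hA : A 1 0 = A 0 1 by rewrite !mxE; exact: hsym.
have hB : B 1 0 = B 0 1 by rewrite !mxE; exact: hsym.
have hd : 0 < B 0 0 * B 1 1 - B 0 1 ^+ 2.
  by apply: (@detB_pos R S B hS); rewrite /B SgE.
have hb1 : 0 <= B 0 0.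
  by rewrite !mxE SgE; exact: diag_ge0.
set b1 := B 0 0 in hd hb1 *; set b2 := B 0 1 in hd hB *; set b3 := B 1 1 in hd *.
have b1pos : 0 < b1.
  rewrite lt0r hb1 andbT; apply/eqP => h0; rewrite h0 mul0r in hd.
  have := sqr_ge0 b2; lra.
set d := b1 * b3 - b2 ^+ 2 in hd.
set a := Num.sqrt d.
have apos : 0 < a by rewrite sqrtr_gt0.
have a2 : a ^+ 2 = d by rewrite sqr_sqrtr // ltW.
set u := Num.sqrt (b1 / a).
have upos : 0 < u by rewrite sqrtr_gt0 divr_gt0.
have u2 : u ^+ 2 = b1 / a by rewrite sqr_sqrtr // ltW // divr_gt0.
have ha0 := gt_eqF apos. have hu0 := gt_eqF upos.
set SI := mx2 u^-1 0 (- b2 / (a * u)) u.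
have hSI : symplectic2 SI.
  by apply: sympl2_det; rewrite !mxE /= mul0r subr0 mulVf // hu0.
have [th hth] := rot_exists _ (A 0 0) (A 0 1) (A 1 1).
exists th, SI; split => //.
set Rm := rotmx th.
have hR : symplectic2 Rm.
  apply: sympl2_det; rewrite /Rm /rotmx !mxE /=.
  have := sin2cos2 th; rewrite !expr2; lra.
set T := block_mx Rm 0 0 SI.
have hT : symplectic4 (T *m S) := @sympl_mul _ _ _ (@sympl_blk _ _ _ hR hSI) hS.
have htr := transformE _ th SI S.
set C' := Rm *m C *m SI^T.
set x := C' 0 0; set y := C' 0 1; set z := C' 1 0; set w := C' 1 1.
set l1 := (Rm *m A *m Rm^T) 0 0; set l2 := (Rm *m A *m Rm^T) 1 1.
have key : transform_cm th SI Sg =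
   block_mx (mx2 l1 0 0 l2) (mx2 x y z w) (mx2 x y z w)^T (mx2 a 0 0 a).
  rewrite /transform_cm /= hblk tr_block_mx !mulmx_block !trmx0 !mulmx0 !mul0mx !addr0 !add0r.
  rewrite -/Rm -/C'; congr block_mx.
  - rewrite [LHS]mx2E; congr mx2.
      rewrite /Rm /rotmx (mx2E _ A) hA mx2_tr !mx2_mul !mxE /=.
      move: hth; set c := cos th; set s := sin th => hth.
      rewrite !expr2 !mxE in hth; lra.
    rewrite /Rm /rotmx (mx2E _ A) hA mx2_tr !mx2_mul !mxE /=.
    move: hth; set c := cos th; set s := sin th => hth.
    rewrite !expr2 !mxE in hth; lra.
  - exact: mx2E.
  - by rewrite -(mx2E _ C') /C' !trmx_mul trmxK !mulmxA.
  - have b1E : b1 = a * u ^+ 2 by rewrite u2; field; rewrite ha0.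
    have b3E : b3 = (a ^+ 2 + b2 ^+ 2) / (a * u ^+ 2).
      rewrite a2 /d -b1E; field; by rewrite gt_eqF.
    rewrite /SI (mx2E _ B) hB mx2_tr !mx2_mul /=.
    have hb2 : B 0 1 = b2 by []. rewrite -/b1 -/b3 hb2 b1E b3E; congr mx2; field; by rewrite ?ha0 ?hu0.
have hpur := @purity _ _ hT.
rewrite -htr -SgE key in hpur.
have hl1 : 0 <= l1.
  have := diag_ge0 _ _ (T *m S) (lshift 2 0).
  by rewrite -htr -SgE key block_mxEul mxE.
have [ha12 [r [phi [hr hnf]]]] := core _ _ _ _ _ _ _ _ apos hl1 hpur.
exists a, r, phi; split => //; split => //.
by rewrite key.
Qed.
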